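(* The function $\mathcal{I}$ is strictly increasing on $[0,1]\cap\mathbb{Q}$: for all rationals $0\le x<y\le1$, $\mathcal{I}(x)<\mathcal{I}(y)$.
   Context: For $x\in\mathbb{R}$ let $\{x\}=x-\lfloor x\rfloor$. The interrobang function $\mathcal{I}\colon[0,1]\cap\mathbb{Q}\to\mathbb{R}$ is defined recursively by $\mathcal{I}(0)=0$; $\mathcal{I}(x)=4^{-\lfloor1/x\rfloor}\big(1-2\,\mathcal{I}(\{1/x\})\big)$ if $0<x\le\tfrac12$; and $\mathcal{I}(x)=\tfrac38-\tfrac34\,\mathcal{I}(1/x-1)-\tfrac12\,\mathcal{I}(1-x)$ if $\tfrac12<x\le1$. The recursion is well founded: with the height $a/b\mapsto|a|+|b|$ ($\gcd(a,b)=1$), every argument on the right-hand side has strictly smaller height than $x$, so $\mathcal{I}$ is uniquely defined. *)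

(* Defs.v *)
From HB Require Import structures.
From mathcomp Require Import all_boot all_order all_algebra.
Set Implicit Arguments. Unset Strict Implicit. Unset Printing Implicit Defensive.
Import Order.TTheory GRing.Theory Num.Theory.
Local Open Scope ring_scope.

Definition fracq (x : rat) : rat := x - (Num.floor x)%:~R.

Definition height (x : rat) : nat := (`|numq x| + `|denq x|)%N.

(* Fuel-indexed unfolding of the defining recursion.  Since every recursive
   argument has strictly smaller height, fuel = height x suffices. *)
Fixpoint interrobang_fuel (n : nat) (x : rat) : rat :=
  match n with
  | O => 0
  | S n' =>
    if x == 0 then 0
    else if x <= 2^-1 then
      (4%:Q) ^ (- Num.floor (x^-1)) * (1 - 2 * interrobang_fuel n' (fracq (x^-1)))
    else
      3 / 8 - 3 / 4 * interrobang_fuel n' (x^-1 - 1)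
            - 2^-1 * interrobang_fuel n' (1 - x)
  end.

Definition interrobang (x : rat) : rat := interrobang_fuel (height x) x.

(* Main.v *)
Require Import Defs.
From HB Require Import structures.
From mathcomp Require Import all_boot all_order all_algebra.
From mathcomp Require Import ring lra zify.
Import Order.TTheory GRing.Theory Num.Theory.
Local Open Scope ring_scope.

Lemma hgt (n d : int) : d != 0 -> (height (n%:~R / d%:~R) <= `|n| + `|d|)%N.
Proof.
move=> + ; case: divqP => [|k x k0]; first by rewrite eqxx.
move=> _; rewrite /height !abszM.
have : (0 < `|k|)%N by rewrite absz_gt0.
nia.
Qed.

Lemma H1 (x : rat) : 0 < x <= 1 -> (height (Defs.fracq x^-1) < height x)%N.
Proof.
move=> /andP[x0 x1].
rewrite [X in (_ < X)%N]/height.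
case: ratP x0 x1 => n d cop x0 x1.
have n0 : 0 < n.
  by rewrite -(ltr0z rat); move: x0; rewrite pmulr_lgt0 // invr_gt0 ltr0z.
pose f := Num.floor ((n%:~R / (Posz d.+1)%:~R)^-1 : rat).
have e : Defs.fracq (n%:~R / d.+1%:~R)^-1 = (Posz d.+1 - f * n)%:~R / n%:~R.
  rewrite /Defs.fracq -/f invf_div intrB intrM; field.
  by rewrite intr_eq0 gt_eqF.
have hf1 := @floor_le rat ((n%:~R / (Posz d.+1)%:~R)^-1).
have hf2 := @floorD1_gt rat ((n%:~R / (Posz d.+1)%:~R)^-1).
rewrite -/f invf_div in hf1 hf2.
have na : 0 < n%:~R :> rat by rewrite ltr0z.
rewrite ler_pdivlMr // in hf1; rewrite ltr_pdivrMr // in hf2.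
rewrite -intrM ler_int in hf1; rewrite -intrM ltr_int in hf2.
rewrite e; apply: leq_ltn_trans (hgt _ _ _) _; first by rewrite gt_eqF.
have hnd : n <= Posz d.+1.
  by rewrite -(ler_int rat); move: x1; rewrite ler_pdivrMr ?ltr0z // mul1r.
rewrite mulrDl mul1r in hf2. move: (f * n) hf1 hf2 => m hf1 hf2. lia.
Qed.

Lemma H2 (x : rat) : 0 < x <= 1 -> (height (x^-1 - 1) < height x)%N.
Proof.
move=> /andP[x0 x1].
rewrite [X in (_ < X)%N]/height.
case: ratP x0 x1 => n d cop x0 x1.
have n0 : 0 < n.
  by rewrite -(ltr0z rat); move: x0; rewrite pmulr_lgt0 // invr_gt0 ltr0z.
have e : (n%:~R / d.+1%:~R)^-1 - 1 = (Posz d.+1 - n)%:~R / n%:~R :> rat.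
  rewrite invf_div intrB; field.
  by rewrite intr_eq0 gt_eqF.
have hnd : n <= Posz d.+1.
  by rewrite -(ler_int rat); move: x1; rewrite ler_pdivrMr ?ltr0z // mul1r.
rewrite e; apply: leq_ltn_trans (hgt _ _ _) _; first by rewrite gt_eqF.
lia.
Qed.

Lemma H3 (x : rat) : 2^-1 < x <= 1 -> (height (1 - x) < height x)%N.
Proof.
move=> /andP[x2 x1].
have x0 : 0 < x by lra.
rewrite [X in (_ < X)%N]/height.
case: ratP x0 x1 x2 => n d cop x0 x1 x2.
have n0 : 0 < n.
  by rewrite -(ltr0z rat); move: x0; rewrite pmulr_lgt0 // invr_gt0 ltr0z.
have e : 1 - (n%:~R / d.+1%:~R) = (Posz d.+1 - n)%:~R / (Posz d.+1)%:~R :> rat.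
  rewrite intrB; field.
  rewrite gt_eqF //; have := ler0n rat d; lra.
have hnd : n <= Posz d.+1.
  by rewrite -(ler_int rat); move: x1; rewrite ler_pdivrMr ?ltr0z // mul1r.
have hnd2 : Posz d.+1 < 2 * n.
  rewrite -(ltr_int rat) intrM; move: x2; rewrite ltr_pdivlMr ?ltr0z //.
  move=> h; rewrite mulrC -ltr_pdivrMr //; lra.
rewrite e; apply: leq_ltn_trans (hgt _ _ _) _; first by [].
lia.
Qed.

Lemma fracq_itv (y : rat) : 0 <= Defs.fracq y < 1.
Proof.
rewrite /Defs.fracq; have h1 := floor_le y; have h2 := floorD1_gt y.
rewrite intrD in h2; apply/andP; split; lra.
Qed.

Lemma inv_facts (x : rat) : 0 < x -> x * x^-1 = 1 /\ 0 < x^-1.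
Proof. by move=> h; rewrite mulfV ?gt_eqF // invr_gt0. Qed.

Lemma height_gt0 (x : rat) : (0 < height x)%N.
Proof. rewrite /height; have := denq_gt0 x; lia. Qed.

Lemma fuel_eq n m (x : rat) : 0 <= x <= 1 -> (height x <= n)%N -> (height x <= m)%N ->
  interrobang_fuel n x = interrobang_fuel m x.
Proof.
elim: n m x => [|n IH] [|m] x hx hn hm; try by have := height_gt0 x; lia.
rewrite /=; case: eqP => [//|/eqP x0].
move: hx => /andP[hx0 hx1].
have xp : 0 < x by rewrite lt_def x0.
case: ifP => xs.
  have hh : (height (Defs.fracq x^-1) < height x)%N by apply: H1; rewrite xp hx1.
  have := fracq_itv x^-1 => /andP[f0 f1].
  by rewrite (IH m) // ?f0 ?ltW //; lia.
have hs : 0 <= x^-1 - 1 <= 1.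
  have := @inv_facts x xp => -[e1 e2].
  move/negbT: xs; rewrite -ltNge => xs.
  apply/andP; split; nra.
have hu : 0 <= 1 - x <= 1 by apply/andP; split; lra.
have h2 : (height (x^-1 - 1) < height x)%N by apply: H2; rewrite xp hx1.
have h3 : (height (1 - x) < height x)%N by apply: H3; rewrite hx1 andbT ltNge xs.
by rewrite (IH m (x^-1 - 1)) ?(IH m (1 - x)) //; lia.
Qed.

Notation I := interrobang.

Lemma I0 : I 0 = 0.
Proof. rewrite /interrobang; case: (height 0) => //= n; by rewrite eqxx. Qed.

Lemma I_small (x : rat) : 0 < x <= 2^-1 ->
  I x = 4%:Q ^ (- Num.floor (x^-1)) * (1 - 2 * I (Defs.fracq (x^-1))).
Proof.
move=> /andP[xp xs].
have hh : (height (Defs.fracq x^-1) < height x)%N by apply: H1; rewrite xp /=; lra.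
have := fracq_itv x^-1 => /andP[f0 f1].
rewrite {1}/interrobang; case E: (height x) hh => [|k] hh; first by have := height_gt0 x; lia.
rewrite /= gt_eqF // xs /interrobang (@fuel_eq k (height (Defs.fracq x^-1))) //.
  by rewrite f0 ltW.
Qed.

Lemma I_big (x : rat) : 2^-1 < x <= 1 ->
  I x = 3 / 8 - 3 / 4 * I (x^-1 - 1) - 2^-1 * I (1 - x).
Proof.
move=> /andP[xs x1].
have xp : 0 < x by lra.
have hs : 0 <= x^-1 - 1 <= 1.
  have := @inv_facts x xp => -[e1 e2].
  apply/andP; split; nra.
have hu : 0 <= 1 - x <= 1 by apply/andP; split; lra.
have h2 : (height (x^-1 - 1) < height x)%N by apply: H2; rewrite xp x1.
have h3 : (height (1 - x) < height x)%N by apply: H3; rewrite xs x1.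
rewrite {1}/interrobang; case E: (height x) h2 h3 => [|k] h2 h3; first by have := height_gt0 x; lia.
rewrite /= gt_eqF // leNgt xs /= /interrobang.
rewrite (@fuel_eq k (height (x^-1 - 1))) // ?(@fuel_eq k (height (1 - x)) (1 - x)) //; lia.
Qed.

Definition P (n : int) : rat := 4%:Q ^ (- n).

Lemma P_gt0 n : 0 < P n.
Proof. by apply: exprz_gt0. Qed.

Lemma P_step m n : m < n -> P n <= P m / 4.
Proof.
move=> mn; rewrite /P.
have -> : - n = - m + - (n - m) by ring.
rewrite exprzDr; last by rewrite unitfE.
have hm : 0 < 4%:Q ^ (- m) by apply: exprz_gt0.
suff h : 4%:Q ^ (- (n - m)) <= 4^-1 by nra.
have : (0 < n - m) by rewrite subr_gt0.
case: (n - m) => [[|j]|j] //= _.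
rewrite -exprnN exprS.
have h1 : 1 <= 4%:Q ^+ j by apply: exprn_ege1.
rewrite invrM ?unitfE ?gt_eqF //; last by lra.
have h2 : (4%:Q ^+ j)^-1 <= 1 by rewrite invf_le1 //; lra.
have h3 : 0 <= (4%:Q ^+ j)^-1 by rewrite invr_ge0; lra.
nra.
Qed.

Lemma P_le n : 2 <= n -> P n <= 16^-1.
Proof.
move=> n2.
have a : P 2 <= 16^-1.
  have := @P_step 1 2 isT; have := @P_step 0 1 isT.
  have P0 : P 0 = 1 by rewrite /P oppr0 expr0z.
  rewrite P0; lra.
move: n2; rewrite le_eqVlt => /orP[/eqP <- //|n2].
have := @P_step 2 n n2; have := P_gt0 2; lra.
Qed.

Definition B (t : rat) := 0 <= I t /\ I t <= 3/8 /\ (0 < t -> 0 < I t) /\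
  (t < 1 -> I t < 3/8) /\ (t <= 2^-1 -> I t <= 16^-1) /\ (2^-1 < t -> 16^-1 < I t).

Lemma I_small' (x : rat) : 0 < x <= 2^-1 ->
  [/\ 2 <= Num.floor (x^-1), 0 <= Defs.fracq (x^-1) < 1,
      (height (Defs.fracq x^-1) < height x)%N &
      I x = P (Num.floor (x^-1)) * (1 - 2 * I (Defs.fracq (x^-1)))].
Proof.
move=> hx; have := hx => /andP[xp xs]; split.
- rewrite floor_ge_int; have := @inv_facts x xp => -[e1 e2]; nra.
- exact: fracq_itv.
- by apply: H1; rewrite xp /=; lra.
- exact: I_small.
Qed.

Lemma I_big' (x : rat) : 2^-1 < x <= 1 ->
  [/\ 0 <= x^-1 - 1 < 1, 0 <= 1 - x < 2^-1, x < 1 -> 0 < 1 - x,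
      (height (x^-1 - 1) < height x)%N /\ (height (1 - x) < height x)%N &
      I x = 3 / 8 - 3 / 4 * I (x^-1 - 1) - 2^-1 * I (1 - x)].
Proof.
move=> hx; have := hx => /andP[xs x1].
have xp : 0 < x by lra.
have := @inv_facts x xp => -[e1 e2].
split.
- apply/andP; split; nra.
- apply/andP; split; lra.
- lra.
- by split; [apply: H2; rewrite xp x1 | apply: H3; rewrite xs x1].
- exact: I_big.
Qed.

Lemma bounds N (t : rat) : (height t <= N)%N -> 0 <= t <= 1 -> B t.
Proof.
elim: N t => [|N IH] t ht /andP[t0 t1]; first by have := height_gt0 t; lia.
have [->|tn0] := eqVneq t 0.
  rewrite /B I0; do !split; move=> *; lra.
have tp : 0 < t by rewrite lt_def tn0.
rewrite /B.
have [ts|tb] := lerP t 2^-1.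
  have hts : 0 < t <= 2^-1 by rewrite tp ts.
  have [n2 /andP[s0 s1] hs ->] := @I_small' t hts.
  have [] := IH (Defs.fracq t^-1); [by rewrite -ltnS (leq_trans hs ht)| by rewrite s0 ltW |].
  move=> a0 [a1 [_ [a2 _]]].
  have p0 := P_gt0 (Num.floor t^-1); have p1 := @P_le _ n2.
  have a3 := a2 s1.
  set p := P _ in p0 p1 *; set a := I _ in a0 a1 a2 a3 *.
  have q0 : 0 <= p * a by rewrite mulr_ge0 // ltW.
  have q1 : p * a <= p * (3/8) by rewrite ler_pM2l.
  have -> : p * (1 - 2 * a) = p - 2 * (p * a) by ring.
  do !split; move=> *; lra.
have htb : 2^-1 < t <= 1 by rewrite tb t1.
have [/andP[s0 s1] /andP[u0 u1] ut [hs hu] ->] := @I_big' t htb.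
have [] := IH (t^-1 - 1); [by rewrite -ltnS (leq_trans hs ht)| by rewrite s0 ltW |].
move=> a0 [a1 [_ [a2 _]]].
have [] := IH (1 - t); [by rewrite -ltnS (leq_trans hu ht)| by rewrite u0 ltW // (lt_le_trans u1) // invf_le1; lra|].
move=> b0 [b1 [b2 [_ [b3 _]]]].
have a3 := a2 s1; have b4 := b3 (ltW u1).
set A := I (t^-1 - 1) in a0 a1 a2 a3 *; set C := I (1 - t) in b0 b1 b2 b3 b4 *.
clear -a0 a1 a3 b0 b1 b2 b4 ut tb.
do !split; move=> *; try lra.
Qed.

Lemma hsum (a b c d N : nat) : (a < c)%N -> (b < d)%N -> (c + d <= N.+1)%N -> (a + b <= N)%N.
Proof. lia. Qed.

Lemma Bt (t : rat) : 0 <= t <= 1 -> B t.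
Proof. exact: (@bounds (height t)). Qed.

Lemma mono N (x y : rat) : (height x + height y <= N)%N -> 0 <= x -> x < y -> y <= 1 -> I x < I y.
Proof.
elim: N x y => [|N IH] x y hN x0 xy y1.
  by have := height_gt0 x; have := height_gt0 y; lia.
have y0 : 0 < y by apply: le_lt_trans xy.
have [By0 [_ [By1 [_ [By2 By3]]]]] : B y by apply: Bt; rewrite ltW.
have [->|xn0] := eqVneq x 0; first by rewrite I0; apply: By1.
have xp : 0 < x by rewrite lt_def xn0.
have [Bx0 [_ [_ [_ [Bx2 Bx3]]]]] : B x by apply: Bt; rewrite x0 (ltW (lt_le_trans xy y1)).
have iv : y^-1 < x^-1 by rewrite ltf_pV2 ?posrE.
have [xs|xb] := lerP x 2^-1.
  have [ys|yb] := lerP y 2^-1; last by have := Bx2 xs; have := By3 yb; lra.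
  have hxs : 0 < x <= 2^-1 by rewrite xp xs.
  have hys : 0 < y <= 2^-1 by rewrite y0 ys.
  have [nx2 /andP[sx0 sx1] hsx ->] := @I_small' x hxs.
  have [ny2 /andP[sy0 sy1] hsy ->] := @I_small' y hys.
  have [ax0 [_ [_ [ax1 _]]]] := Bt (Defs.fracq x^-1) (introT andP (conj sx0 (ltW sx1))).
  have [ay0 [_ [_ [ay1 _]]]] := Bt (Defs.fracq y^-1) (introT andP (conj sy0 (ltW sy1))).
  have ax2 := ax1 sx1; have ay2 := ay1 sy1.
  have fle : Num.floor y^-1 <= Num.floor x^-1 by apply: le_floor; apply: ltW.
  move: fle; rewrite le_eqVlt => /orP[/eqP fe|flt].
    have fl : Defs.fracq y^-1 < Defs.fracq x^-1 by rewrite /Defs.fracq fe; lra.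
    have hh : (height (Defs.fracq y^-1) + height (Defs.fracq x^-1) <= N)%N.
      have := @hsum _ _ _ _ N hsy hsx. rewrite addnC; exact.
    have := IH _ _ hh sy0 fl (ltW sx1).
    rewrite fe; have := P_gt0 (Num.floor x^-1).
    set p := P _; set a := I _; set b := I _ => p0 ab.
    have : p * a < p * b by rewrite ltr_pM2l.
    lra.
  have := @P_step _ _ flt; have := P_gt0 (Num.floor y^-1); have := P_gt0 (Num.floor x^-1).
  set px := P (Num.floor x^-1); set py := P (Num.floor y^-1).
  set a := I (Defs.fracq x^-1); set b := I (Defs.fracq y^-1) => px0 py0 pxy.
  have q0 : 0 <= px * a by rewrite mulr_ge0 // ltW.
  have q1 : py * b <= py * (3/8) by rewrite ler_pM2l // ltW.
  have q2 : py * b < py * (3/8) by rewrite ltr_pM2l.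
  have -> : px * (1 - 2 * a) = px - 2 * (px * a) by ring.
  have -> : py * (1 - 2 * b) = py - 2 * (py * b) by ring.
  lra.
have yb : 2^-1 < y by apply: lt_trans xy.
have hxb : 2^-1 < x <= 1 by rewrite xb (ltW (lt_le_trans xy y1)).
have hyb : 2^-1 < y <= 1 by rewrite yb y1.
have [/andP[sx0 sx1] /andP[ux0 ux1] _ [hsx hux] ->] := @I_big' x hxb.
have [/andP[sy0 sy1] /andP[uy0 uy1] _ [hsy huy] ->] := @I_big' y hyb.
have hh1 : (height (y^-1 - 1) + height (x^-1 - 1) <= N)%N.
  have := @hsum _ _ _ _ N hsy hsx; rewrite addnC; exact.
have hh2 : (height (1 - y) + height (1 - x) <= N)%N.
  have := @hsum _ _ _ _ N huy hux; rewrite addnC; exact.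
have l1 : y^-1 - 1 < x^-1 - 1 by lra.
have l2 : 1 - y < 1 - x by lra.
have h1 := IH _ _ hh1 sy0 l1 (ltW sx1).
have l3 : 1 - x <= 1 by lra.
have h2 := IH _ _ hh2 uy0 l2 l3.
lra.
Qed.

Theorem mainTheorem9 (x y : rat) :
  0 <= x -> x < y -> y <= 1 -> interrobang x < interrobang y.
Proof. by move=> *; apply: (@mono (height x + height y)). Qed.
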